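(* Let $C$ be a subadditive monotone normalized cost function. Then for every profile of (monotone, normalized) valuations and every tie-breaking rule among profit-maximizing bundles, the allocation $\overrightarrow{ALG}$ produced by the Sequential Mechanism satisfies $\pi(\overrightarrow{ALG})\le n\cdot\pi(\overrightarrow{OPT})$, where $\overrightarrow{OPT}$ minimizes the social cost.
   Context: Setting. $N=\{1,\dots,n\}$ is a set of players and $M_1,\dots,M_n$ are pairwise disjoint finite sets; $M=\bigcup_i M_i$; allocations $\vec S=(S_1,\dots,S_n)$ with $S_i\subseteq M_i$ are identified with subsets of $M$. A cost function is a monotone $C:2^M\to\mathbb{R}_{\ge0}$ with $C(\emptyset)=0$; subadditive: $C(S)+C(T)\ge C(S\cup T)$. Valuations $v_i:2^{M_i}\to\mathbb{R}_{\ge0}$ are monotone with $v_i(\emptyset)=0$. Sequential Mechanism (with a given tie-breaking rule): start with $ALG_i=\emptyset$ for all $i$; for $i=1,\dots,n$ in order, set $ALG_i$ to some element of $\arg\max_{S\subseteq M_i}v_i(S)-[C(\overrightarrow{ALG}\cup S)-C(\overrightarrow{ALG})]$ (with $\overrightarrow{ALG}$ the current allocation of players $1,\dots,i-1$), and charge $p_i=C(ALG_1,\dots,ALG_i)-C(ALG_1,\dots,ALG_{i-1})$. Social cost: $\pi(\vec S)=C(\vec S)+\sum_i[v_i(M_i)-v_i(S_i)]$. *)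

(* Defs.v *)
From HB Require Import structures.
From mathcomp Require Import all_boot all_order all_algebra.
Set Implicit Arguments. Unset Strict Implicit. Unset Printing Implicit Defensive.
Import Order.TTheory GRing.Theory Num.Theory.
Local Open Scope ring_scope.

(* Items: a finite type M; [own x] is the player owning item x, so
   M_i = [set x | own x == i]. The sets M_i are pairwise disjoint and cover M.
   Allocations (S_1..S_n) with S_i \subset M_i are identified with subsets of M. *)

Definition Mi (M : finType) (n : nat) (own : M -> 'I_n) (i : 'I_n) : {set M} :=
  [set x | own x == i].

Definition cost_fn (R : realFieldType) (M : finType) (C : {set M} -> R) : Prop :=
  C set0 = 0 /\ (forall S : {set M}, 0 <= C S) /\ (forall S T : {set M}, S \subset T -> C S <= C T).

Definition subadditive (R : realFieldType) (M : finType) (C : {set M} -> R) : Prop :=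
  forall S T : {set M}, C (S :|: T) <= C S + C T.

(* Valuation of player i: a function on subsets of M_i (values on other sets
   are irrelevant), monotone, nonnegative, v(emptyset) = 0. *)
Definition valuation (R : realFieldType) (M : finType) (Mi : {set M})
  (v : {set M} -> R) : Prop :=
  v set0 = 0 /\ (forall S : {set M}, S \subset Mi -> 0 <= v S) /\
  (forall S T : {set M}, S \subset T -> T \subset Mi -> v S <= v T).

Definition prefix_alloc (M : finType) (n : nat) (ALG : 'I_n -> {set M}) (i : 'I_n)
  : {set M} := \bigcup_(j < n | (j < i)%N) ALG j.

(* ALG is a possible run of the Sequential Mechanism (for some tie-breaking
   rule): every player i chooses a profit-maximizing bundle ALG i \subset M_i
   given the allocation of players 1..i-1. *)
Definition sequential_run (R : realFieldType) (M : finType) (n : nat)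
  (own : M -> 'I_n) (C : {set M} -> R) (v : 'I_n -> {set M} -> R)
  (ALG : 'I_n -> {set M}) : Prop :=
  forall i : 'I_n,
    ALG i \subset Mi own i /\
    forall S : {set M}, S \subset Mi own i ->
      v i S - (C (prefix_alloc ALG i :|: S) - C (prefix_alloc ALG i))
      <= v i (ALG i) - (C (prefix_alloc ALG i :|: ALG i) - C (prefix_alloc ALG i)).

Definition outcome (M : finType) (n : nat) (ALG : 'I_n -> {set M}) : {set M} :=
  \bigcup_(i < n) ALG i.

Definition social_cost (R : realFieldType) (M : finType) (n : nat)
  (own : M -> 'I_n) (C : {set M} -> R) (v : 'I_n -> {set M} -> R) (S : {set M}) : R :=
  C S + \sum_(i < n) (v i (Mi own i) - v i (S :&: Mi own i)).

(* Main.v *)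
Require Import Defs.
From HB Require Import structures.
From mathcomp Require Import all_boot all_order all_algebra.
From mathcomp Require Import ring lra.
Import Order.TTheory GRing.Theory Num.Theory.
Local Open Scope ring_scope.

Definition Bk {M : finType} {n : nat} (ALG : 'I_n -> {set M}) (k : nat) : {set M} :=
  \bigcup_(j < n | (j < k)%N) ALG j.

Lemma BkS {M : finType} {n : nat} (ALG : 'I_n -> {set M}) (i : 'I_n) :
  Bk ALG i :|: ALG i = Bk ALG i.+1.
Proof.
apply/setP => x; rewrite inE; apply/idP/idP.
- case/orP.
  + case/bigcupP => j Hj Hx; apply/bigcupP; exists j => //; exact: ltnW.
  + move=> Hx; apply/bigcupP; exists i => //.
- case/bigcupP => j Hj Hx.
  rewrite ltnS leq_eqVlt in Hj; case/orP: Hj => [/eqP Hj|Hj].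
  + by apply/orP; right; rewrite -(val_inj Hj).
  + by apply/orP; left; apply/bigcupP; exists j.
Qed.

Theorem lemma7p3 (R : realFieldType) (M : finType) (n : nat) (own : M -> 'I_n)
  (C : {set M} -> R) (v : 'I_n -> {set M} -> R)
  (ALG : 'I_n -> {set M}) (OPT : {set M}) :
  cost_fn C -> subadditive C ->
  (forall i, valuation (Mi own i) (v i)) ->
  sequential_run own C v ALG ->
  (forall T : {set M}, social_cost own C v OPT <= social_cost own C v T) ->
  social_cost own C v (outcome ALG) <= n%:R * social_cost own C v OPT.
Proof.
move=> [C0 [Cge0 Cmon]] Csub Hv Hrun _.
have Hdisj : forall i, outcome ALG :&: Mi own i = ALG i.
  move=> i; apply/setP => x; rewrite inE; apply/idP/idP.
  - case/andP => /bigcupP [j _ Hx] Hi.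
    have Hj := subsetP (Hrun j).1 x Hx.
    move: Hj Hi; rewrite /Mi !inE => /eqP Hj /eqP Hi.
    by have <- : j = i by rewrite -Hj -Hi.
  - move=> Hx; rewrite (subsetP (Hrun i).1 x Hx) andbT.
    by apply/bigcupP; exists i.
have Htel : \sum_(i < n) (C (Bk ALG i.+1) - C (Bk ALG i)) = C (outcome ALG).
  rewrite -(big_mkord xpredT (fun i => C (Bk ALG i.+1) - C (Bk ALG i))).
  rewrite telescope_sumr // /Bk.
  have -> : \bigcup_(j < n | (j < 0)%N) ALG j = set0 by rewrite big_pred0.
  rewrite C0 subr0 /outcome.
  by rewrite (eq_bigl xpredT) // => j; rewrite ltn_ord.
have Hstep : forall i : 'I_n,
  v i (OPT :&: Mi own i) - C (OPT :&: Mi own i)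
  <= v i (ALG i) - (C (Bk ALG i.+1) - C (Bk ALG i)).
  move=> i; have [_ H] := Hrun i.
  have := H (OPT :&: Mi own i) (subsetIr _ _).
  rewrite /prefix_alloc -/(Bk ALG i) BkS.
  have := Csub (Bk ALG i) (OPT :&: Mi own i). lra.
have Hsum : \sum_(i < n) (v i (OPT :&: Mi own i) - C (OPT :&: Mi own i))
  <= \sum_(i < n) (v i (ALG i) - (C (Bk ALG i.+1) - C (Bk ALG i))).
  by apply: ler_sum => i _; exact: Hstep.
rewrite sumrB [X in _ <= X]sumrB Htel in Hsum.
have HCO : \sum_(i < n) C (OPT :&: Mi own i) <= n%:R * C OPT.
  have : \sum_(i < n) C (OPT :&: Mi own i) <= \sum_(i < n) C OPT.
    by apply: ler_sum => i _; apply: Cmon; exact: subsetIl.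
  by rewrite sumr_const card_ord mulr_natl.
have Hnn : 0 <= \sum_(i < n) (v i (Mi own i) - v i (OPT :&: Mi own i)).
  apply: sumr_ge0 => i _; rewrite subr_ge0.
  by have [_ [_ Hm]] := Hv i; apply: Hm => //; exact: subsetIr.
have Hn : \sum_(i < n) (v i (Mi own i) - v i (OPT :&: Mi own i))
   <= n%:R * \sum_(i < n) (v i (Mi own i) - v i (OPT :&: Mi own i)).
  case: (posnP n) => [Hn0|Hnpos].
    rewrite big1 ?mulr0 // => i _.
    exfalso; have := ltn_ord i; move: (nat_of_ord i) => k; by rewrite Hn0.
  rewrite -[X in X <= _]mul1r; apply: ler_wpM2r => //.
  by rewrite ler1n.
rewrite /social_cost.
under eq_bigr => i _ do rewrite Hdisj.
rewrite !sumrB in Hn Hnn *.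
rewrite mulrDr. lra.
Qed.
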